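(* Let $a\ge 2$ be an integer, $B=(1,a,a+1)$ and let $M>0$ be an integer. If $(a+1)\nmid M$ and $M\ge a\left(\lfloor \frac{M}{a+1}\rfloor+1\right)$, then $O_B(M)=1+\lfloor \frac{M}{a+1}\rfloor$. Otherwise, $O_B(M)=M-a\lfloor \frac{M}{a+1}\rfloor$.
   Context: $\mathbb{N}=\{0,1,2,\dots\}$. For $B=(b_1,\dots,b_k)$ of positive integers and an integer $M$, $O_B(M)=\min\{\sum_{i=1}^k x_i : \sum_{i=1}^k b_ix_i=M,\ x_i\in\mathbb{N}\}$. *)

(* Defs.v *)
From mathcomp Require Import all_boot.
Set Implicit Arguments. Unset Strict Implicit. Unset Printing Implicit Defensive.

Definition is_repr (B : seq nat) (M : nat) (x : seq nat) : Prop :=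
  size x = size B /\ \sum_(i < size B) nth 0 B i * nth 0 x i = M.

Definition OB_eq (B : seq nat) (M k : nat) : Prop :=
  (exists x, is_repr B M x /\ \sum_(i < size B) nth 0 x i = k) /\
  (forall x, is_repr B M x -> k <= \sum_(i < size B) nth 0 x i).

(* Main.v *)
Require Import Defs.
From mathcomp Require Import all_boot.
From mathcomp Require Import zify.

Lemma repr3 (a M : nat) x : is_repr [:: 1; a; a + 1] M x ->
  exists x0 x1 x2, x = [:: x0; x1; x2] /\ x0 + a * x1 + (a + 1) * x2 = M.
Proof.
case=> hs; case: x hs => [|x0 [|x1 [|x2 [|]]]] // _.
rewrite !big_ord_recr big_ord0 /= => <-.
by exists x0, x1, x2; split=> //; lia.
Qed.

Lemma sum3 (x0 x1 x2 : nat) : \sum_(i < size [:: 1; 1; 1]) nth 0 [:: x0; x1; x2] i = x0 + x1 + x2.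
Proof. by rewrite !big_ord_recr big_ord0 /= add0n. Qed.

Lemma mk3 (a M x0 x1 x2 : nat) : x0 + a * x1 + (a + 1) * x2 = M ->
  is_repr [:: 1; a; a + 1] M [:: x0; x1; x2].
Proof. move=> h; split=> //; rewrite !big_ord_recr big_ord0 /=; lia. Qed.

Theorem mainTheorem2 (a M : nat) (ha : 2 <= a) (hM : 0 < M) :
  let B := [:: 1; a; a + 1] in
  let q := M %/ (a + 1) in
  if ~~ ((a + 1) %| M) && (a * (q + 1) <= M)
  then OB_eq B M (1 + q)
  else OB_eq B M (M - a * q).
Proof.
move=> B q.
have hM' : M = q * (a + 1) + M %% (a + 1) by rewrite /q -divn_eq.
have hr : M %% (a + 1) < a + 1 by rewrite ltn_mod; lia.
set r := M %% (a + 1) in hM' hr.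
have hdv : ((a + 1) %| M) = (r == 0) by rewrite /dvdn.
rewrite hdv.
case: ifP => [/andP [hr0 hle] | hno].
- split.
  + exists [:: 0; a + 1 - r; q + r - a]; split.
      apply: mk3. move: hr0; rewrite -lt0n => hr0. nia.
    rewrite (_ : size B = size [:: 1; 1; 1]) // sum3; lia.
  + move=> x /repr3 [x0 [x1 [x2 [-> he]]]].
    rewrite (_ : size B = size [:: 1; 1; 1]) // sum3.
    have : x0 + x1 + x2 > q.
      rewrite ltnNge; apply/negP => hs.
      have : (a + 1) * (x0 + x1 + x2) <= (a + 1) * q by rewrite leq_mul2l hs orbT.
      move: hr0; rewrite -lt0n; nia.
    lia.
- have hq : r = 0 \/ M < a * (q + 1).
    move: hno; case: (r =P 0) => [|_] /=; first by left.
    by move/negbT; rewrite -ltnNge; right.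
  split.
  + exists [:: r; 0; q]; split.
      by apply: mk3; lia.
    rewrite (_ : size B = size [:: 1; 1; 1]) // sum3; nia.
  + move=> x /repr3 [x0 [x1 [x2 [-> he]]]].
    rewrite (_ : size B = size [:: 1; 1; 1]) // sum3.
    case: hq => hq.
      have : (a + 1) * (x0 + x1 + x2) >= M by nia.
      nia.
    have hy : x1 + x2 <= q.
      rewrite leqNgt; apply/negP => hy.
      have : a * (q + 1) <= a * (x1 + x2) by rewrite leq_mul2l; lia.
      nia.
    have : a * (x1 + x2) <= a * q by rewrite leq_mul2l hy orbT.
    nia.
Qed.
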